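(* Let $f,g:\mathbb{R}\to\mathbb{R}^2$ be continuous injections that are homeomorphisms onto their images, and let $M\subseteq\mathbb{R}$ be closed and nowhere dense. Then $g(\mathbb{R})\cap f(M)$ is meager in the subspace $g(\mathbb{R})$. *)

(* Defs.v *)
From Stdlib Require Import Reals.
Open Scope R_scope.

Definition R2 : Type := (R * R)%type.

Definition dist2 (p q : R2) : R :=
  sqrt ((fst p - fst q) ^ 2 + (snd p - snd q) ^ 2).

Definition continuous_R_R2 (f : R -> R2) : Prop :=
  forall x eps, 0 < eps ->
    exists delta, 0 < delta /\
      forall y, Rabs (y - x) < delta -> dist2 (f y) (f x) < eps.

(* f is injective and its inverse f(R) -> R is continuous (w.r.t. the
   subspace topology on f(R)) *)
Definition inverse_continuous_on_image (f : R -> R2) : Prop :=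
  forall x eps, 0 < eps ->
    exists delta, 0 < delta /\
      forall y, dist2 (f y) (f x) < delta -> Rabs (y - x) < eps.

Definition embedding_R_R2 (f : R -> R2) : Prop :=
  continuous_R_R2 f /\
  (forall x y, f x = f y -> x = y) /\
  inverse_continuous_on_image f.

Definition closure_R (A : R -> Prop) (x : R) : Prop :=
  forall eps, 0 < eps -> exists y, A y /\ Rabs (y - x) < eps.

Definition closed_R (A : R -> Prop) : Prop :=
  forall x, closure_R A x -> A x.

Definition nowhere_dense_R (A : R -> Prop) : Prop :=
  ~ (exists x eps, 0 < eps /\
       forall y, Rabs (y - x) < eps -> closure_R A y).

Definition rel_closure (Y A : R2 -> Prop) (p : R2) : Prop :=
  Y p /\ forall eps, 0 < eps -> exists q, Y q /\ A q /\ dist2 q p < eps.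

Definition nowhere_dense_in (Y A : R2 -> Prop) : Prop :=
  ~ (exists p eps, Y p /\ 0 < eps /\
       forall q, Y q -> dist2 q p < eps -> rel_closure Y A q).

Definition meager_in (Y S : R2 -> Prop) : Prop :=
  exists N : nat -> R2 -> Prop,
    (forall n, nowhere_dense_in Y (N n)) /\
    (forall p, S p -> exists n, N n p).

Definition image (f : R -> R2) (A : R -> Prop) (p : R2) : Prop :=
  exists t, A t /\ f t = p.

(* Main.v *)
Require Import Defs.
From Stdlib Require Import Reals Lra Classical ClassicalEpsilon.
Open Scope R_scope.

Lemma dist_fst (p q : R2) : Rabs (fst p - fst q) <= dist2 p q.
Proof.
  unfold dist2. rewrite <- sqrt_Rsqr_abs. apply sqrt_le_1_alt.
  unfold Rsqr. pose proof (pow2_ge_0 (snd p - snd q)).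
  replace ((fst p - fst q)^2) with ((fst p - fst q)*(fst p - fst q)) by ring. lra.
Qed.

Lemma dist_snd (p q : R2) : Rabs (snd p - snd q) <= dist2 p q.
Proof.
  unfold dist2. rewrite <- sqrt_Rsqr_abs. apply sqrt_le_1_alt.
  unfold Rsqr. pose proof (pow2_ge_0 (fst p - fst q)).
  replace ((snd p - snd q)^2) with ((snd p - snd q)*(snd p - snd q)) by ring. lra.
Qed.

Lemma Rabs_le_between (x a : R) : Rabs x <= a -> - a <= x <= a.
Proof. unfold Rabs; destruct Rcase_abs; lra. Qed.

Lemma compact_lemma (f : R -> R2) (M : R -> Prop) (n : R) (P : R2) :
  continuous_R_R2 f -> closed_R M ->
  (forall eps, 0 < eps -> exists m, M m /\ Rabs m <= n /\ dist2 (f m) P < eps) ->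
  exists m, M m /\ Rabs m <= n /\ f m = P.
Proof.
  intros hf hM H.
  set (E := fun x => x <= n /\ forall eps, 0 < eps ->
         exists m, M m /\ Rabs m <= n /\ x <= m /\ dist2 (f m) P < eps).
  assert (hn : 0 <= n).
  { destruct (H 1 Rlt_0_1) as [m [_ [Hm _]]]. pose proof (Rabs_pos m). lra. }
  assert (hE : E (- n)).
  { split. lra. intros eps he. destruct (H eps he) as [m [Mm [Hm Hd]]].
    exists m. repeat split; auto.
    apply Rabs_le_between in Hm. lra. }
  destruct (completeness E) as [xs [Hub Hlub]].
  { exists n. intros x [Hx _]. exact Hx. }
  { exists (- n). exact hE. }
  assert (key : forall eta eps, 0 < eta -> 0 < eps ->
     exists m, M m /\ Rabs m <= n /\ Rabs (m - xs) < eta /\ dist2 (f m) P < eps).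
  { intros eta eps heta heps. apply NNPP. intro Hn.
    assert (Hall : forall m, M m -> Rabs m <= n -> Rabs (m - xs) < eta -> ~ dist2 (f m) P < eps).
    { intros m a b c d. apply Hn. exists m; auto. }
    assert (Hx : exists x, E x /\ xs - eta < x).
    { apply NNPP. intro Hx. assert (xs <= xs - eta); [|lra].
      apply Hlub. intros x Ex. destruct (Rle_lt_dec x (xs - eta)); auto.
      exfalso. apply Hx. exists x; auto. }
    destruct Hx as [x [[Hxn Ex] Hxl]].
    assert (HE : E (xs + eta)).
    { assert (Hm : forall e, 0 < e -> exists m, M m /\ Rabs m <= n /\ xs + eta <= m /\ dist2 (f m) P < e).
      { intros e he. destruct (Ex (Rmin e eps)) as [m [Mm [Hmn [Hxm Hd]]]].
        { apply Rmin_glb_lt; auto. }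
        exists m. split; auto. split; auto. split.
        - destruct (Rle_lt_dec (xs + eta) m); auto. exfalso.
          apply (Hall m Mm Hmn). unfold Rabs; destruct Rcase_abs; lra.
          pose proof (Rmin_r e eps). lra.
        - pose proof (Rmin_l e eps). lra. }
      split.
      - destruct (Hm 1 Rlt_0_1) as [m [_ [Hmn [Hle _]]]].
        apply Rabs_le_between in Hmn. lra.
      - exact Hm. }
    pose proof (Hub _ HE). lra. }
  assert (Mxs : M xs).
  { apply hM. intros eps he. destruct (key eps 1 he Rlt_0_1) as [m [Mm [_ [Hd _]]]].
    exists m; auto. }
  exists xs. split; auto. split.
  { apply Rabs_le. split.
    - apply Hub in hE. lra.
    - apply Hlub. intros x [Hx _]. exact Hx. }
  assert (Hc : forall e, 0 < e -> Rabs (fst (f xs) - fst P) < e /\ Rabs (snd (f xs) - snd P) < e).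
  { intros e he. destruct (hf xs (e/2)) as [d [hd Hd]]. lra.
    destruct (key d (e/2) hd) as [m [_ [_ [Hmd Hmp]]]]. lra.
    specialize (Hd m Hmd).
    pose proof (dist_fst (f m) (f xs)). pose proof (dist_fst (f m) P).
    pose proof (dist_snd (f m) (f xs)). pose proof (dist_snd (f m) P).
    split.
    - replace (fst (f xs) - fst P) with (- (fst (f m) - fst (f xs)) + (fst (f m) - fst P)) by ring.
      eapply Rle_lt_trans. apply Rabs_triang. rewrite Rabs_Ropp. lra.
    - replace (snd (f xs) - snd P) with (- (snd (f m) - snd (f xs)) + (snd (f m) - snd P)) by ring.
      eapply Rle_lt_trans. apply Rabs_triang. rewrite Rabs_Ropp. lra. }
  destruct (f xs) as [a b]; destruct P as [c d]. simpl in Hc.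
  f_equal; apply cond_eq; intros e he; apply (Hc e he).
Qed.

Lemma no_interval (f g : R -> R2) (M : R -> Prop) :
  embedding_R_R2 f -> embedding_R_R2 g -> nowhere_dense_R M ->
  forall s d, 0 < d -> (forall t, Rabs (t - s) < d -> exists m, M m /\ f m = g t) -> False.
Proof.
  intros [_ [finj finv]] [gc [ginj _]] hMn s d hd Hcov.
  set (h := fun t => epsilon (inhabits 0) (fun m => M m /\ f m = g t)).
  assert (Hh : forall t, Rabs (t - s) < d -> M (h t) /\ f (h t) = g t).
  { intros t Ht. unfold h. apply epsilon_spec. apply Hcov; auto. }
  set (cl := fun x => Rmax s (Rmin (s + d/2) x)).
  assert (Hcl : forall x, s <= cl x <= s + d/2).
  { intros x; unfold cl, Rmax, Rmin; repeat destruct Rle_dec; lra. }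
  assert (Hcl2 : forall x y, Rabs (cl x - cl y) <= Rabs (x - y)).
  { intros x y; unfold cl, Rmax, Rmin; repeat destruct Rle_dec;
    unfold Rabs; repeat destruct Rcase_abs; lra. }
  assert (Hcli : forall x, Rabs (cl x - s) < d).
  { intros x; specialize (Hcl x); unfold Rabs; destruct Rcase_abs; lra. }
  assert (Hs : cl s = s).
  { unfold cl, Rmax, Rmin; repeat destruct Rle_dec; lra. }
  assert (Hs2 : cl (s + d/2) = s + d/2).
  { unfold cl, Rmax, Rmin; repeat destruct Rle_dec; lra. }
  set (a := h s). set (b := h (s + d/2)).
  assert (hab : a <> b).
  { intro E. assert (g s = g (s + d/2)).
    { destruct (Hh s) as [_ E1]. rewrite Rminus_diag, Rabs_R0; lra.
      destruct (Hh (s + d/2)) as [_ E2].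
      replace (s + d/2 - s) with (d/2) by ring. rewrite Rabs_right; lra.
      rewrite <- E1, <- E2. fold a b. now rewrite E. }
    apply ginj in H. lra. }
  assert (Hbet : forall c, (a - c) * (b - c) < 0 -> M c).
  { intros c Hc.
    assert (Hcont : continuity (fun t => h (cl t) - c)).
    { intros x. unfold continuity_pt, continue_in, limit1_in, limit_in. simpl. unfold R_dist.
      intros eps heps.
      destruct (finv (h (cl x)) eps heps) as [d1 [hd1 Hd1]].
      destruct (gc (cl x) d1 hd1) as [d2 [hd2 Hd2]].
      exists d2. split; auto. intros x0 [_ Hx0].
      replace (h (cl x0) - c - (h (cl x) - c)) with (h (cl x0) - h (cl x)) by ring.
      apply Hd1. destruct (Hh (cl x0) (Hcli x0)) as [_ E1].
      destruct (Hh (cl x) (Hcli x)) as [_ E2]. rewrite E1, E2.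
      apply Hd2. eapply Rle_lt_trans. apply Hcl2. exact Hx0. }
    destruct (IVT_cor _ s (s + d/2) Hcont) as [z [_ Hz]].
    { lra. }
    { rewrite Hs, Hs2. apply Rlt_le; exact Hc. }
    replace c with (h (cl z)) by lra. apply (Hh _ (Hcli z)). }
  apply hMn. exists ((a + b)/2), (Rabs (b - a)/2). split.
  { assert (0 < Rabs (b - a)). apply Rabs_pos_lt. intro E. apply hab. lra. lra. }
  clearbody a b. intros y Hy. intros eps heps. exists y. split.
  - apply Hbet. destruct (Rlt_or_le a b) as [Hl|Hl].
    + rewrite (Rabs_right (b - a)) in Hy by lra.
      assert (a < y < b) by (unfold Rabs in Hy; destruct Rcase_abs in Hy; lra). nra.
    + assert (b < a) by (destruct Hl; auto; exfalso; apply hab; auto).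
      rewrite (Rabs_left (b - a)) in Hy by lra.
      assert (b < y < a) by (unfold Rabs in Hy; destruct Rcase_abs in Hy; lra). nra.
  - rewrite Rminus_diag, Rabs_R0. lra.
Qed.

Theorem mainTheorem7 (f g : R -> R2) (M : R -> Prop)
  (hf : embedding_R_R2 f) (hg : embedding_R_R2 g)
  (hMc : closed_R M) (hMn : nowhere_dense_R M) :
  meager_in (image g (fun _ => True))
            (fun p => image g (fun _ => True) p /\ image f M p).
Proof.
  exists (fun n p => image g (fun _ => True) p /\ image f (fun m => M m /\ Rabs m <= INR n) p).
  split.
  - intros n [p [eps [[s [_ Ps]] [heps H]]]]. subst p.
    destruct hg as [gc gr]. pose proof hf as hf'. destruct hf' as [fc _].
    destruct (gc s eps heps) as [d [hd Hd]].
    apply (no_interval f g M hf (conj gc gr) hMn s d hd).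
    intros t Ht.
    destruct (H (g t) (ex_intro _ t (conj I eq_refl)) (Hd t Ht)) as [_ Hcl].
    destruct (compact_lemma f M (INR n) (g t) fc hMc) as [m [Mm [_ Hm]]].
    { intros e he. destruct (Hcl e he) as [q [_ [[_ [m [[Mm Hmn] Hfm]]] Hq]]].
      subst q. exists m; auto. }
    exists m; auto.
  - intros p [Yp [m [Mm Hm]]].
    destruct (INR_unbounded (Rabs m)) as [n Hn]. exists n.
    split; auto. exists m. split; auto. split; auto. lra.
Qed.
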